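(* Let $\mathbf G$ be a torsion-free locally cyclic group such that $\mathcal O_{\mathbf G}(x)\cong\mathcal I_{\mathbf G}(x)$ (as graphs) for all $x\in G$. Then $\mathbf G\cong(\mathbb Q,+)$.
   Context: For a group $\mathbf G$, the directed $Z^\pm$-power graph $\vec{\mathcal G}^\pm(\mathbf G)$ has vertex set $G$ and an arc $x\to y$ for distinct $x,y$ iff $y=x^n$ for some $n\in\mathbb Z\setminus\{0\}$; its underlying simple graph is the $Z^\pm$-power graph $\mathcal G^\pm(\mathbf G)$ (distinct $x,y$ adjacent iff $y=x^n$ or $x=y^n$ for some nonzero integer $n$). For $x\in G$ let $I_{\mathbf G}(x)=\{y\in G\setminus\{x^{-1}\}\mid y\to x\}$ and $O_{\mathbf G}(x)=\{y\in G\setminus\{x^{-1}\}\mid x\to y\}$ (arcs in $\vec{\mathcal G}^\pm(\mathbf G)$), and let $\mathcal I_{\mathbf G}(x)$, $\mathcal O_{\mathbf G}(x)$ be the subgraphs of $\mathcal G^\pm(\mathbf G)$ induced by $I_{\mathbf G}(x)$, $O_{\mathbf G}(x)$ respectively. *)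

(* Defs.v *)
From HB Require Import structures.
From Stdlib Require Lists.List.
From mathcomp Require Import all_boot all_order all_algebra.
Set Implicit Arguments. Unset Strict Implicit. Unset Printing Implicit Defensive.
Import GRing.Theory Num.Theory.

Record is_group (G : Type) (mul : G -> G -> G) (one : G) (inv : G -> G) : Prop :=
  { grp_assoc : forall a b c, mul a (mul b c) = mul (mul a b) c;
    grp_mul1g : forall a, mul one a = a;
    grp_mulg1 : forall a, mul a one = a;
    grp_mulVg : forall a, mul (inv a) a = one;
    grp_mulgV : forall a, mul a (inv a) = one }.

Definition npow (G : Type) (mul : G -> G -> G) (one : G) (x : G) (k : nat) : G :=
  iter k (mul x) one.

Definition zpow (G : Type) (mul : G -> G -> G) (one : G) (inv : G -> G)
    (x : G) (n : int) : G :=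
  match n with
  | Posz k => npow mul one x k
  | Negz k => inv (npow mul one x k.+1)
  end.

Definition torsion_free (G : Type) (mul : G -> G -> G) (one : G) (inv : G -> G) : Prop :=
  forall (x : G) (n : int), n != 0 -> zpow mul one inv x n = one -> x = one.

Inductive gen (G : Type) (mul : G -> G -> G) (one : G) (inv : G -> G)
    (l : list G) : G -> Prop :=
  | gen_base : forall x, Stdlib.Lists.List.In x l -> gen mul one inv l x
  | gen_one : gen mul one inv l one
  | gen_inv : forall x, gen mul one inv l x -> gen mul one inv l (inv x)
  | gen_mul : forall x y, gen mul one inv l x -> gen mul one inv l y ->
              gen mul one inv l (mul x y).

Definition locally_cyclic (G : Type) (mul : G -> G -> G) (one : G) (inv : G -> G) : Prop :=
  forall l : list G, exists g : G,
    gen mul one inv l g /\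
    (forall x, gen mul one inv l x <-> exists n : int, x = zpow mul one inv g n).

Definition arc (G : Type) (mul : G -> G -> G) (one : G) (inv : G -> G) (x y : G) : Prop :=
  x <> y /\ exists n : int, n != 0 /\ y = zpow mul one inv x n.

Definition adj (G : Type) (mul : G -> G -> G) (one : G) (inv : G -> G) (x y : G) : Prop :=
  arc mul one inv x y \/ arc mul one inv y x.

Definition Iset (G : Type) (mul : G -> G -> G) (one : G) (inv : G -> G) (x y : G) : Prop :=
  y <> inv x /\ arc mul one inv y x.
Definition Oset (G : Type) (mul : G -> G -> G) (one : G) (inv : G -> G) (x y : G) : Prop :=
  y <> inv x /\ arc mul one inv x y.

Definition induced_iso (V : Type) (e : V -> V -> Prop) (A B : V -> Prop) : Prop :=
  exists f : {y : V | A y} -> {y : V | B y},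
    bijective f /\
    forall a b : {y : V | A y}, e (proj1_sig a) (proj1_sig b) <->
                               e (proj1_sig (f a)) (proj1_sig (f b)).

Definition iso_to_Q (G : Type) (mul : G -> G -> G) : Prop :=
  exists f : G -> rat, bijective f /\ forall a b, f (mul a b) = (f a + f b)%R.

(* Main.v *)
From HB Require Import structures.
Require Import Defs.
From mathcomp Require Import all_boot all_order all_algebra.
From mathcomp Require boolp.
From mathcomp Require Import zify ring.

Set Implicit Arguments. Unset Strict Implicit.
Import GRing.Theory Num.Theory.
From Stdlib Require Import Setoid.
Lemma ppow (q N : nat) : prime q -> 0 < N ->
  (forall r, prime r -> r %| N -> r = q) -> N = q ^ logn q N.
Proof.
move=> qP N0 H; case: (pfactor_coprime qP N0) => m cm E.
suff m1 : m = 1 by rewrite {1}E m1 mul1n.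
case: m cm E => [|[|m]] cm E; first by rewrite E mul0n in N0.
  by [].
have rP : prime (pdiv m.+2) by apply: pdiv_prime.
have rN : pdiv m.+2 %| N by rewrite E; apply: dvdn_mulr; apply: pdiv_dvd.
have := H _ rP rN => rq.
by move: cm; rewrite prime_coprime // -rq pdiv_dvd.
Qed.

Lemma N1 (U W : nat) : 1 < U -> 1 < W -> U != W ->
  (forall M, 1 < M -> (M %| W) || (W %| M) -> (M %| U) || (U %| M)) ->
  (U %| W) /\ (forall M, 1 < M -> (M %| W*W) || (W*W %| M) -> (M %| U) || (U %| M)).
Proof.
move=> U1 W1 UW H.
have UdW : U %| W.
  have := H W W1; rewrite dvdnn orbT => /(_ isT) /orP [WU|//].
  exfalso; move/dvdnP: WU => [k Ek].
  have k2 : 1 < k.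
    case: k Ek => [|[|k]] Ek //; first by move: U1; rewrite Ek.
    by move: UW; rewrite Ek mul1n eqxx.
  have := H (W * k.+1); rewrite dvdn_mulr // orbT.
  have M1 : 1 < W * k.+1 by nia.
  move=> /(_ M1 isT).
  rewrite Ek [k * W]mulnC !dvdn_pmul2l; try lia.
  move=> /orP [A|A].
  - have k0 : 0 < k by lia.
    have := dvdn_leq k0 A; lia.
  - have : k %| 1 by rewrite -(dvdn_addr 1 (dvdnn k)) addn1.
    rewrite dvdn1 => /eqP k1; lia.
split=> //.
move/dvdnP: UdW => [k Ek].
have k2 : 1 < k.
  case: k Ek => [|[|k]] Ek //; first by move: W1; rewrite Ek.
  by move: UW; rewrite Ek mul1n eqxx.
set q := pdiv k.
have qP : prime q by apply: pdiv_prime.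
have qk : q %| k by apply: pdiv_dvd.
have A : forall r, prime r -> r %| W -> r %| U.
  move=> r rP rW; have := H r (prime_gt1 rP); rewrite rW => /(_ isT) /orP [//|Ur].
  have : U = r by apply/(prime_nt_dvdP rP) => //; lia.
  by move=> ->.
have B : forall r, prime r -> r %| U -> r = q.
  move=> r rP rU; apply/eqP; apply: contraT => rq.
  have r0 : 0 < U %/ r by rewrite divn_gt0 ?prime_gt0 // dvdn_leq //; lia.
  have EU : U = U %/ r * r by rewrite divnK.
  have := H (U %/ r * q).
  have -> : (U %/ r * q %| W) = true.
    apply: (@dvdn_trans (U %/ r * k)); first by rewrite dvdn_pmul2l.
    rewrite Ek; apply/dvdnP; exists r.
    set t := U %/ r; rewrite {1}EU -/t; nia.
  have M1 : 1 < U %/ r * q by have := prime_gt1 qP; nia.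
  move=> /(_ M1 isT).
  set t := U %/ r; rewrite -/t in EU r0; rewrite EU.
  rewrite !dvdn_pmul2l // !dvdn_prime2 // => /orP [/eqP E|/eqP E].
  - by move: rq; rewrite E eqxx.
  - by move: rq; rewrite E eqxx.
have EU : U = q ^ logn q U by apply: ppow => //; lia.
have EW : W = q ^ logn q W.
  by apply: ppow => //; [lia | move=> r rP rW; apply: B => //; apply: A].
move=> M M1 /orP [MZ|ZM].
- have : M %| q ^ (logn q W + logn q W) by rewrite expnD -EW.
  case/(dvdn_pfactor _ _ qP) => s _ ->.
  rewrite EU; case: (leqP s (logn q U)) => h.
  + by rewrite dvdn_exp2l.
  + by rewrite orbC dvdn_exp2l // ltnW.
- rewrite orbC; apply/orP; left.
  apply: dvdn_trans ZM; apply: (dvdn_trans _ (dvdn_mull W (dvdnn W))).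
  by rewrite Ek dvdn_mull.
Qed.
Definition Dm (T : Type) (e : T -> T -> Prop) (P : T -> Prop) (u w : T) : Prop :=
  w <> u /\ forall m, P m -> (m = w \/ e m w) -> (m = u \/ e m u).
Definition Phi (T : Type) (e : T -> T -> Prop) (P : T -> Prop) : Prop :=
  exists u, P u /\ exists a b c, P a /\ P b /\ P c /\ a <> b /\ a <> c /\ b <> c /\
    forall w, P w -> (Dm e P u w <-> (w = a \/ w = b \/ w = c)).

Section Transport.
Variables (T1 T2 : Type) (e1 : T1 -> T1 -> Prop) (e2 : T2 -> T2 -> Prop).
Variables (P1 : T1 -> Prop) (P2 : T2 -> Prop) (s : T1 -> T2).
Hypothesis Hmap : forall x, P1 x -> P2 (s x).
Hypothesis Hsurj : forall y, P2 y -> exists x, P1 x /\ s x = y.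
Hypothesis Hinj : forall x y, P1 x -> P1 y -> s x = s y -> x = y.
Hypothesis Hrel : forall x y, P1 x -> P1 y -> (e1 x y <-> e2 (s x) (s y)).

Lemma eqs x y : P1 x -> P1 y -> (x = y <-> s x = s y).
Proof. by move=> Px Py; split; [move->|apply: Hinj]. Qed.

Lemma Dm_tr u w : P1 u -> P1 w -> (Dm e1 P1 u w <-> Dm e2 P2 (s u) (s w)).
Proof.
move=> Pu Pw; rewrite /Dm; split.
- move=> [wu H]; split; first by move=> /(Hinj Pw Pu).
  move=> m2 Pm2; case: (Hsurj Pm2) => m [Pm <-].
  rewrite -(eqs Pm Pw) -(eqs Pm Pu) -(Hrel Pm Pw) -(Hrel Pm Pu).
  exact: H.
- move=> [wu H]; split; first by move=> E; apply: wu; rewrite E.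
  move=> m Pm; rewrite (eqs Pm Pw) (eqs Pm Pu) (Hrel Pm Pw) (Hrel Pm Pu).
  exact: H (Hmap Pm).
Qed.

Lemma Phi_tr : Phi e1 P1 <-> Phi e2 P2.
Proof.
split.
- move=> [u [Pu [a [b [c [Pa [Pb [Pc [ab [ac [bc H]]]]]]]]]]].
  exists (s u); split; first exact: Hmap.
  exists (s a), (s b), (s c); do 3 (split; first exact: Hmap).
  split; first by move/(Hinj Pa Pb).
  split; first by move/(Hinj Pa Pc).
  split; first by move/(Hinj Pb Pc).
  move=> w2 Pw2; case: (Hsurj Pw2) => w [Pw <-].
  by rewrite -(Dm_tr Pu Pw) (H _ Pw) (eqs Pw Pa) (eqs Pw Pb) (eqs Pw Pc).
- move=> [u2 [Pu2 [a2 [b2 [c2 [Pa2 [Pb2 [Pc2 [ab [ac [bc H]]]]]]]]]]].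
  case: (Hsurj Pu2) => u [Pu Eu]; case: (Hsurj Pa2) => a [Pa Ea].
  case: (Hsurj Pb2) => b [Pb Eb]; case: (Hsurj Pc2) => c [Pc Ec].
  subst.
  exists u; split=> //; exists a, b, c; do 3 (split=> //).
  split; first by move=> E; apply: ab; rewrite E.
  split; first by move=> E; apply: ac; rewrite E.
  split; first by move=> E; apply: bc; rewrite E.
  move=> w Pw.
  by rewrite (Dm_tr Pu Pw) (H _ (Hmap Pw)) (eqs Pw Pa) (eqs Pw Pb) (eqs Pw Pc).
Qed.
End Transport.
Import GRing.Theory Num.Theory.
Local Open Scope ring_scope.
Lemma abs_cases (w : int) (N : nat) : absz w = N -> w = N%:Z \/ w = - N%:Z.
Proof.
case: w => n /= <-; first by left.
by right; rewrite NegzE.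
Qed.

Lemma absz_gt0 (w : int) : (1 < absz w)%N -> w != 0.
Proof. by case: w => [[|n]|n]. Qed.

Lemma pig (x1 x2 x3 x4 a b c : int) :
  (x1 = a \/ x1 = b \/ x1 = c) -> (x2 = a \/ x2 = b \/ x2 = c) ->
  (x3 = a \/ x3 = b \/ x3 = c) -> (x4 = a \/ x4 = b \/ x4 = c) ->
  x1 <> x2 -> x1 <> x3 -> x1 <> x4 -> x2 <> x3 -> x2 <> x4 -> x3 <> x4 -> False.
Proof.
by move=> [->|[->|->]] [->|[->|->]] [->|[->|->]] [->|[->|->]].
Qed.

Definition cmpZ (n m : int) : bool := (absz n %| absz m)%N || (absz m %| absz n)%N.
Definition eZ (n m : int) : Prop := n <> m /\ cmpZ n m.

Lemma cmpZ_refl n : cmpZ n n.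
Proof. by rewrite /cmpZ dvdnn. Qed.

Lemma eZ_or m w : (m = w \/ eZ m w) <-> cmpZ m w.
Proof.
split; first by case=> [->|[]//]; apply: cmpZ_refl.
by move=> h; case: (eqVneq m w) => [->|/eqP ne]; [left|right].
Qed.

Lemma Dm_eZ (T : int -> Prop) u w :
  Dm eZ T u w <-> (w <> u /\ forall m, T m -> cmpZ m w -> cmpZ m u).
Proof.
rewrite /Dm; split=> [[h1 h2]|[h1 h2]]; split=> // m Tm.
- by rewrite -!eZ_or; apply: h2.
- by rewrite !eZ_or; apply: h2.
Qed.

Lemma cmpZN m w : cmpZ m (- w) = cmpZ m w.
Proof. by rewrite /cmpZ abszN. Qed.

Lemma LZ1 : ~ Phi eZ (fun n : int => (1 < absz n)%N).
Proof.
move=> [u [Pu [a [b [c [Pa [Pb [Pc [ab [ac [bc H]]]]]]]]]]].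
have HD w : (1 < absz w)%N -> w <> u -> (forall m, (1 < absz m)%N -> cmpZ m w -> cmpZ m u) ->
    w = a \/ w = b \/ w = c.
  by move=> Tw wu hw; apply/(H _ Tw)/Dm_eZ.
have Hin w : (1 < absz w)%N -> (w = a \/ w = b \/ w = c) -> w <> u /\
    (forall m, (1 < absz m)%N -> cmpZ m w -> cmpZ m u).
  by move=> Tw /(H _ Tw)/Dm_eZ.
have u0 := absz_gt0 Pu.
have Nu : - u <> u by move=> /eqP; rewrite eqNr (negbTE u0).
have mu : - u = a \/ - u = b \/ - u = c.
  by apply: HD; rewrite ?abszN // => m _; rewrite cmpZN.
have [w [Pw [wa [wu wnu]]]] : exists w, (1 < absz w)%N /\ (w = a \/ w = b \/ w = c) /\
    w <> u /\ w <> - u.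
  have [ua|ua] := eqVneq a (- u).
  - exists b; split=> //; split; first by right; left.
    split; first by case: (Hin b Pb (or_intror (or_introl erefl))).
    by move=> E; apply: ab; rewrite ua E.
  - exists a; split=> //; split; first by left.
    split; first by case: (Hin a Pa (or_introl erefl)).
    by apply/eqP.
have [wu' Hw] := Hin w Pw wa.
have UW : absz u != absz w.
  apply/eqP => E.
  have [Ew|Ew] := abs_cases (esym E); have [Eu|Eu] := abs_cases (erefl (absz u)).
  - by apply: wu; rewrite Ew -Eu.
  - apply: wnu; rewrite Ew; apply/eqP; rewrite eq_sym eqr_oppLR; apply/eqP; exact: Eu.
  - by apply: wnu; rewrite Ew -Eu.
  - by apply: wu; rewrite Ew -Eu.
have Hn : forall M, (1 < M)%N -> (M %| absz w)%N || (absz w %| M)%N ->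
    (M %| absz u)%N || (absz u %| M)%N.
  by move=> M M1 hM; apply: (Hw (M%:Z)).
have [UdW H'] := N1 Pu Pw UW Hn.
have ULW : (absz u < absz w)%N.
  by rewrite ltn_neqAle UW dvdn_leq // ltnW.
set W := absz w in Pw UW Hn H' UdW ULW.
have WW : (W < W * W)%N by rewrite -{1}[W]muln1 ltn_mul2l Pw andbT ltnW.
have mz : (W * W)%:Z = a \/ (W * W)%:Z = b \/ (W * W)%:Z = c.
  apply: HD => /=.
  - exact: ltn_trans Pw WW.
  - move=> E; have : absz u = (W * W)%N by rewrite -E.
    by move=> E'; have := ltn_trans ULW WW; rewrite E' ltnn.
  - move=> m Tm; rewrite /cmpZ /= => /H'; exact.
have mnw : - w = a \/ - w = b \/ - w = c.
  apply: HD; first by rewrite abszN.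
  - by move=> E; apply: wnu; rewrite -E opprK.
  - by move=> m Tm; rewrite cmpZN; apply: Hw.
have w0 := absz_gt0 Pw.
apply: (pig mu wa mnw mz).
- by move=> E; apply: wnu; rewrite -E.
- by move=> /oppr_inj E; apply: wu; rewrite E.
- move=> E; have : absz (- u) = absz ((W * W)%:Z) by rewrite E.
  by rewrite abszN /= => E'; have := ltn_trans ULW WW; rewrite E' ltnn.
- by move=> /eqP; rewrite eq_sym eqNr (negbTE w0).
- move=> E; have : absz w = absz ((W * W)%:Z) by rewrite E.
  by rewrite /= -/W => E'; move: WW; rewrite -{1}E' ltnn.
- move=> E; have : absz (- w) = absz ((W * W)%:Z) by rewrite E.
  by rewrite abszN /= -/W => E'; move: WW; rewrite -{1}E' ltnn.
Qed.

Lemma LZ2 (p : nat) (T : int -> Prop) : prime p ->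
  (forall n, T n -> (1 < absz n)%N) ->
  (forall n, T n -> ~~ (p ^ 3 %| absz n)%N) ->
  (forall n d, T n -> (1 < absz d)%N -> (absz d %| absz n)%N -> T d) ->
  T (p * p)%N%:Z -> Phi eZ T.
Proof.
move=> pP T1 T2 T3 Tpp.
have p1 := prime_gt1 pP.
have pp1 : (1 < p * p)%N by rewrite (leq_trans p1) // leq_pmulr // ltnW.
have Tp : T p%:Z by apply: (T3 _ _ Tpp) => //=; apply: dvdn_mulr.
have Tnp : T (- p%:Z) by apply: (T3 _ _ Tpp); rewrite abszN //=; apply: dvdn_mulr.
have Tnpp : T (- (p * p)%N%:Z) by apply: (T3 _ _ Tpp); rewrite abszN.
exists p%:Z; split=> //; exists (- p%:Z), (p * p)%N%:Z, (- (p * p)%N%:Z).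
do 3 (split=> //).
split; first by nia.
split; first by nia.
split; first by nia.
move=> w Tw; rewrite Dm_eZ; split.
- move=> [wp H]; have := H w Tw (cmpZ_refl w); rewrite /cmpZ /= => /orP [wdp|pdw].
  + have Ew : absz w = p.
      apply/(prime_nt_dvdP pP) => //; rewrite neq_ltn (T1 _ Tw) orbT //.
    by case: (abs_cases Ew) => Ew'; [|left].
  + have w0 : (0 < absz w)%N by rewrite ltnW // T1.
    case: (pfactor_coprime pP w0) => r cr E.
    have r1 : r = 1%N.
      case: r cr E => [|[|r]] cr E; first by move: w0; rewrite E mul0n.
        by [].
      have Tr : T r.+2%:Z by apply: (T3 _ _ Tw) => //=; rewrite E dvdn_mulr.
      have := H _ Tr; rewrite /cmpZ /= E dvdn_mulr // => /(_ isT) /orP [rp|pr].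
      * have Er : r.+2 = p by apply/(prime_nt_dvdP pP).
        by move: cr; rewrite Er prime_coprime // dvdnn.
      * by move: cr; rewrite prime_coprime // pr.
    move: E; rewrite r1 mul1n; set e := logn p (absz w) => E.
    have e1 : (0 < e)%N.
      case: e E => // E; by move: (T1 _ Tw); rewrite E.
    have e2 : (e <= 2)%N.
      rewrite leqNgt; apply/negP => e3; move: (T2 _ Tw); rewrite E dvdn_exp2l //.
    have [e_1|e_2] : e = 1%N \/ e = 2%N by lia.
    * move: E; rewrite e_1 expn1 => Ew.
      by case: (abs_cases Ew) => Ew'; [|left].
    * move: E; rewrite e_2 expnS expn1 => Ew.
      by case: (abs_cases Ew) => Ew'; right; [left|right].
- move=> Hw; split.
  + case: Hw => [->|[->|->]]; nia.
  + have key : forall m, T m -> cmpZ m (p * p)%N%:Z -> cmpZ m p%:Z.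
      move=> m Tm; rewrite /cmpZ /= => /orP [mpp|ppm].
      * have Epp : (p * p = p ^ 2)%N by rewrite expnS expn1.
        move: mpp; rewrite Epp => /(dvdn_pfactor _ _ pP) [s _ Em].
        apply/orP; right; rewrite Em.
        case: s Em => [|s] Em; first by move: (T1 _ Tm); rewrite Em.
        by rewrite -{1}[p]expn1 dvdn_exp2l.
      * by apply/orP; right; apply: dvdn_trans ppm; apply: dvdn_mulr.
    case: Hw => [->|[->|->]] m Tm; rewrite ?cmpZN //.
    exact: key.
    exact: key.
Qed.

From Stdlib Require Import ClassicalEpsilon Classical.

Definition arcV (V : zmodType) (x y : V) : Prop :=
  x <> y /\ exists n : int, n != 0 /\ y = x *~ n.
Definition adjV (V : zmodType) (x y : V) : Prop := arcV x y \/ arcV y x.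
Definition OV (V : zmodType) (x y : V) : Prop := y <> - x /\ arcV x y.
Definition IV (V : zmodType) (x y : V) : Prop := y <> - x /\ arcV y x.

Lemma cmpZ_ex n m : cmpZ n m <-> exists k, m = k * n \/ n = k * m.
Proof.
change (((n %| m)%Z || (m %| n)%Z) <-> exists k, m = k * n \/ n = k * m).
split.
- by case/orP=> /dvdzP [k Ek]; exists k; [left|right].
- by case=> k [Ek|Ek]; apply/orP; [left|right]; apply/dvdzP; exists k.
Qed.

Lemma invrel (n m k : int) : n != 0 -> m != 0 ->
  ((m%:~R : rat)^-1 = k%:~R / n%:~R) <-> n = k * m.
Proof.
move=> n0 m0; rewrite -[(m%:~R : rat)^-1]div1r; split=> [/eqP|E].
- by rewrite eqr_div ?intr_eq0 // mul1r -intrM eqr_int => /eqP.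
- by apply/eqP; rewrite eqr_div ?intr_eq0 // E mul1r intrM.
Qed.

Lemma abs_gt1 (n : int) : n != 0 -> n != 1 -> n != -1 -> (1 < absz n)%N.
Proof. by case: n => [[|[|k]]|[|k]]. Qed.

Lemma abs_gt1_ne (n : int) : (1 < absz n)%N -> [/\ n != 0, n != 1 & n != -1].
Proof. by case: n => [[|[|k]]|[|k]]. Qed.


Section ZV.
Variable V : zmodType.
Hypothesis tf : forall (x : V) (n : int), n != 0 -> x *~ n = 0 -> x = 0.
Hypothesis lc : forall a b : V, exists h i j, a = h *~ i /\ b = h *~ j.

Lemma tf_inj (x : V) m n : x != 0 -> x *~ m = x *~ n -> m = n.
Proof.
move=> x0 E; apply/eqP; apply: contraT => mn.
have : x *~ (m - n) = 0 by rewrite mulrzBr E subrr.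
by move/(tf _); rewrite subr_eq0 => /(_ mn) /eqP; rewrite (negbTE x0).
Qed.

Lemma root_inj (y z : V) n : n != 0 -> y *~ n = z *~ n -> y = z.
Proof.
move=> n0 E; apply/eqP; rewrite -subr_eq0; apply/eqP; apply: (tf n0).
by rewrite mulrzBl E subrr.
Qed.

Lemma rep (g y : V) : g != 0 -> exists m k : int, m != 0 /\ y *~ m = g *~ k.
Proof.
move=> g0; case: (lc g y) => h [i [j [Eg Ey]]].
exists i, j; split.
  by apply/eqP => i0; move/eqP: g0; apply; rewrite Eg i0 mulr0z.
by rewrite Eg Ey -!mulrzA mulrC.
Qed.

Definition phi (g y : V) : rat :=
  let p := epsilon (inhabits (1%:Z, 0%:Z))
    (fun p : int * int => p.1 != 0 /\ y *~ p.1 = g *~ p.2) in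
  p.2%:~R / p.1%:~R.

Lemma phi_spec (g y : V) (m k : int) : g != 0 -> m != 0 -> y *~ m = g *~ k ->
  phi g y = k%:~R / m%:~R.
Proof.
move=> g0 m0 E; rewrite /phi.
have := @epsilon_spec _ (inhabits (1%:Z, 0%:Z))
    (fun p : int * int => p.1 != 0 /\ y *~ p.1 = g *~ p.2) (ex_intro _ (m, k) (conj m0 E)).
set p := epsilon _ _ => -[p1 Ep].
have km : p.2 * m = k * p.1.
  apply: (tf_inj g0).
  by rewrite !mulrzA -Ep -E -!mulrzA mulrC.
apply/eqP; rewrite eqr_div ?intr_eq0 //.
by rewrite -!intrM km.
Qed.

Lemma phi_ex (g y : V) : g != 0 -> exists m k : int, m != 0 /\ y *~ m = g *~ k /\
  phi g y = k%:~R / m%:~R.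
Proof.
move=> g0; case: (rep y g0) => m [k [m0 E]].
by exists m, k; split=> //; split=> //; apply: phi_spec.
Qed.

Lemma phi_add (g y z : V) : g != 0 -> phi g (y + z) = phi g y + phi g z.
Proof.
move=> g0; case: (phi_ex y g0) => m [k [m0 [E ->]]].
case: (phi_ex z g0) => m' [k' [m0' [E' ->]]].
rewrite (@phi_spec g (y + z) (m * m') (k * m' + k' * m)) //.
- rewrite intrD !intrM; field.
  by rewrite !intr_eq0 m0 m0'.
- by rewrite mulf_neq0.
- rewrite mulrzDl mulrzDr; congr (_ + _).
    by rewrite (mulrzA y) E -mulrzA.
  by rewrite [m * m']mulrC (mulrzA z) E' -mulrzA.
Qed.

Lemma phi_mulz (g y : V) (n : int) : g != 0 -> phi g (y *~ n) = n%:~R * phi g y.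
Proof.
move=> g0; case: (phi_ex y g0) => m [k [m0 [E ->]]].
rewrite (@phi_spec g (y *~ n) m (k * n)) //.
- by rewrite intrM mulrA [n%:~R * _]mulrC.
- by rewrite -mulrzA [n * m]mulrC (mulrzA y) E -mulrzA.
Qed.

Lemma phi_inj (g y z : V) : g != 0 -> phi g y = phi g z -> y = z.
Proof.
move=> g0; case: (phi_ex y g0) => m [k [m0 [E ->]]].
case: (phi_ex z g0) => m' [k' [m0' [E' ->]]].
move/eqP; rewrite eqr_div ?intr_eq0 // -!intrM eqr_int => /eqP km.
apply: (@root_inj _ _ (m * m')); first by rewrite mulf_neq0.
by rewrite (mulrzA y) E -mulrzA km [m * m']mulrC (mulrzA z) E' -mulrzA mulrC.
Qed.

Lemma phi_self (g : V) : g != 0 -> phi g g = 1.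
Proof. by move=> g0; rewrite (@phi_spec g g 1 1) // divr1. Qed.

Lemma phi_eq0 (g y : V) : g != 0 -> (phi g y == 0) = (y == 0).
Proof.
move=> g0; have p0 : phi g 0 = 0.
  by rewrite -(mulr0z (0 : V)) phi_mulz // mul0r.
apply/eqP/eqP => [E|->//]; apply: (phi_inj g0); by rewrite E p0.
Qed.


Lemma mulz_neq0 (x : V) n : x != 0 -> n != 0 -> x *~ n != 0.
Proof. by move=> x0 n0; apply/eqP => /(tf n0) /eqP; rewrite (negbTE x0). Qed.

Lemma O_char (x y : V) : x != 0 ->
  (OV x y <-> exists n : int, (1 < absz n)%N /\ y = x *~ n).
Proof.
move=> x0; split.
- move=> [ynx [xy [n [n0 Ey]]]]; exists n; split=> //.
  apply: abs_gt1 => //; apply/eqP => E; subst n.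
  + by apply: xy; rewrite Ey mulr1z.
  + by apply: ynx; rewrite Ey mulrNz mulr1z.
- move=> [n [n1 Ey]]; case: (abs_gt1_ne n1) => n0 nn1 nm1; split; [|split].
  + move=> E; move: nm1; rewrite -(@tf_inj x n (-1)) ?eqxx //.
    by rewrite -Ey E mulrNz mulr1z.
  + move=> E; move: nn1; rewrite -(@tf_inj x n 1) ?eqxx //.
    by rewrite -Ey E mulr1z.
  + by exists n.
Qed.

Lemma I_char (x y : V) : x != 0 ->
  (IV x y <-> exists n : int, (1 < absz n)%N /\ y *~ n = x).
Proof.
move=> x0; split.
- move=> [ynx [yx [n [n0 Ex]]]]; exists n; split; last by rewrite Ex.
  apply: abs_gt1 => //; apply/eqP => E; subst n.
  + by apply: yx; rewrite Ex mulr1z.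
  + by apply: ynx; rewrite Ex mulrNz mulr1z opprK.
- move=> [n [n1 Ey]]; case: (abs_gt1_ne n1) => n0 nn1 nm1; split; [|split].
  + move=> E; move/eqP: nm1; apply.
    have : x *~ (- n) = x *~ 1 by rewrite mulrNz -mulNrz -E Ey mulr1z.
    by move/(tf_inj x0) => h; rewrite -[n]opprK h.
  + move=> E; move/eqP: nn1; apply.
    have : x *~ n = x *~ 1 by rewrite mulr1z -{2}Ey E.
    by move/(tf_inj x0).
  + by exists n.
Qed.

Lemma adj_phi (g y z : V) : g != 0 -> y != 0 -> z != 0 ->
  (adjV y z <-> y <> z /\ exists k : int,
     phi g z = k%:~R * phi g y \/ phi g y = k%:~R * phi g z).
Proof.
move=> g0 y0 z0; split.
- case=> [[yz [n [n0 Ez]]]|[zy [n [n0 Ey]]]].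
  + by split=> //; exists n; left; rewrite Ez phi_mulz.
  + split; first by move=> E; apply: zy; rewrite E.
    by exists n; right; rewrite Ey phi_mulz.
- move=> [yz [k [E|E]]].
  + left; split=> //; exists k.
    have Ez : z = y *~ k by apply: (phi_inj g0); rewrite phi_mulz.
    split=> //; apply/eqP => k0; move: z0; rewrite Ez k0 mulr0z eqxx //.
  + right; split; first by move=> E'; apply: yz; rewrite E'.
    exists k.
    have Ey : y = z *~ k by apply: (phi_inj g0); rewrite phi_mulz.
    split=> //; apply/eqP => k0; move: y0; rewrite Ey k0 mulr0z eqxx //.
Qed.


Lemma ex_int (n m : int) :
  (exists k : int, (m%:~R : rat) = k%:~R * n%:~R \/ (n%:~R : rat) = k%:~R * m%:~R)
  <-> cmpZ n m.
Proof.
rewrite cmpZ_ex; split=> -[k [E|E]]; exists k.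
- by left; apply: (@intr_inj rat); rewrite intrM.
- by right; apply: (@intr_inj rat); rewrite intrM.
- by left; rewrite E intrM.
- by right; rewrite E intrM.
Qed.

Lemma O_noPhi (x : V) : x != 0 -> ~ Phi (@adjV V) (OV x).
Proof.
move=> x0 HP; apply: LZ1.
have iO n : numq (phi x (x *~ n)) = n by rewrite phi_mulz // phi_self // mulr1 numq_int.
have n0 n : (1 < absz n)%N -> n != 0 by case/abs_gt1_ne.
suff T : Phi (@adjV V) (OV x) <-> Phi eZ (fun n => (1 < absz n)%N) by apply/T.
apply: (@Phi_tr V int (@adjV V) eZ (OV x) (fun n => (1 < absz n)%N)
          (fun y => numq (phi x y))).
- by move=> y /(O_char _ x0) [n [n1 ->]]; rewrite iO.
- by move=> n n1; exists (x *~ n); split; [apply/(O_char _ x0); exists n | rewrite iO].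
- move=> y z /(O_char _ x0) [n [n1 ->]] /(O_char _ x0) [m [m1 ->]].
  by rewrite !iO => ->.
- move=> y z /(O_char _ x0) [n [n1 ->]] /(O_char _ x0) [m [m1 ->]].
  rewrite !iO (@adj_phi x) ?mulz_neq0 ?n0 // !phi_mulz // phi_self // !mulr1.
  rewrite /eZ -ex_int; split=> -[ne H]; split=> //.
  + by move=> E; apply: ne; rewrite E.
  + by move=> E; apply: ne; apply: tf_inj E.
Qed.

Lemma phiI (x y : V) (n : int) : x != 0 -> n != 0 -> y *~ n = x ->
  phi x y = (n%:~R)^-1.
Proof.
move=> x0 n0 E; rewrite (@phi_spec x y n 1) ?mul1r //; by rewrite E mulr1z.
Qed.

Lemma I_Phi (x : V) (p : nat) : x != 0 -> prime p ->
  (exists y0, y0 *~ (p * p)%N%:Z = x) -> (forall z : V, z *~ (p ^ 3)%N%:Z <> x) ->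
  Phi (@adjV V) (IV x).
Proof.
move=> x0 pP [y0 Ey0] np3.
have n0 n : (1 < absz n)%N -> n != 0 by case/abs_gt1_ne.
have iI y n : (1 < absz n)%N -> y *~ n = x -> numq ((phi x y)^-1) = n.
  by move=> n1 E; rewrite (phiI x0 (n0 _ n1) E) invrK numq_int.
have y0' y n : y *~ n = x -> y != 0.
  by move=> E; apply/eqP => y00; move: x0; rewrite -E y00 mul0rz eqxx.
have T : Phi (@adjV V) (IV x) <-> Phi eZ (fun n => (1 < absz n)%N /\ exists z, z *~ n = x).
apply: (@Phi_tr V int (@adjV V) eZ (IV x)
          (fun n => (1 < absz n)%N /\ exists z, z *~ n = x)
          (fun y => numq ((phi x y)^-1))).
- by move=> y /(I_char _ x0) [n [n1 E]]; rewrite (iI _ _ n1 E); split=> //; exists y.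
- move=> n [n1 [z Ez]]; exists z; split; last by rewrite (iI _ _ n1 Ez).
  by apply/(I_char _ x0); exists n.
- move=> y z /(I_char _ x0) [n [n1 Ey]] /(I_char _ x0) [m [m1 Ez]].
  rewrite (iI _ _ n1 Ey) (iI _ _ m1 Ez) => nm; subst m.
  by apply: (root_inj (n0 _ n1)); rewrite Ey Ez.
- move=> y z /(I_char _ x0) [n [n1 Ey]] /(I_char _ x0) [m [m1 Ez]].
  rewrite (iI _ _ n1 Ey) (iI _ _ m1 Ez).
  rewrite (@adj_phi x _ _ x0 (y0' _ _ Ey) (y0' _ _ Ez)).
  rewrite (phiI x0 (n0 _ n1) Ey) (phiI x0 (n0 _ m1) Ez).
  rewrite /eZ cmpZ_ex; split=> -[ne H]; split.
  + by move=> E; apply: ne; apply: (root_inj (n0 _ n1)); rewrite Ey E Ez.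
  + case: H => k [E|E]; exists k.
    * by right; apply/invrel => //; apply: n0.
    * by left; apply/invrel => //; apply: n0.
  + by move=> E; apply: ne; rewrite -(iI _ _ n1 Ey) -(iI _ _ m1 Ez) E.
  + case: H => k [E|E]; exists k.
    * by right; apply/invrel => //; apply: n0.
    * by left; apply/invrel => //; apply: n0.
apply/T; apply: (LZ2 pP).
- by move=> n [].
- move=> n [n1 [z Ez]]; apply/negP => dv.
  have : ((p ^ 3)%N%:Z %| n)%Z by [].
  case/dvdzP => q Eq; apply: (np3 (z *~ q)).
  by rewrite -mulrzA -Eq.
- move=> n d [n1 [z Ez]] d1 dv; split=> //.
  have : (d %| n)%Z by [].
  case/dvdzP => q Eq; exists (z *~ q).
  by rewrite -mulrzA -Eq.
- split; last by exists y0.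
  by have := prime_gt1 pP; rewrite /=; nia.
Qed.

Hypothesis HisoPhi : forall x : V, Phi (@adjV V) (IV x) -> Phi (@adjV V) (OV x).

Lemma KEY (y0 : V) (p : nat) : prime p -> ~ (exists z, z *~ p%:Z = y0) -> False.
Proof.
move=> pP nd.
have p0 : p%:Z != 0 by rewrite eqz_nat -lt0n prime_gt0.
have y00 : y0 != 0.
  by apply/eqP => E; apply: nd; exists 0; rewrite mul0rz E.
have pp0 : (p * p)%N%:Z != 0 by rewrite eqz_nat muln_eq0 negb_or -!lt0n prime_gt0.
set x := y0 *~ (p * p)%N%:Z.
have x0 : x != 0 by apply: mulz_neq0.
apply: (O_noPhi x0); apply: HisoPhi; apply: (I_Phi x0 pP); first by exists y0.
move=> z Ez; apply: nd; exists z.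
have E3 : (p ^ 3)%N%:Z = p%:Z * (p * p)%N%:Z by rewrite -PoszM !expnS expn0 muln1.
by apply: (root_inj pp0); rewrite -(mulrzA z) -E3 Ez.
Qed.

Lemma div_all (n : nat) : forall y : V, (0 < n)%N -> exists z, z *~ n%:Z = y.
Proof.
elim: n {-2}n (leqnn n) => [|N IH] n nN y n0; first by lia.
have [n1|n1] := eqVneq n 1%N; first by exists y; rewrite n1 mulr1z.
have n2 : (1 < n)%N by lia.
set p := pdiv n.
have pP : prime p by apply: pdiv_prime.
have En : n = (n %/ p * p)%N by rewrite divnK // pdiv_dvd.
have n'0 : (0 < n %/ p)%N by rewrite divn_gt0 ?prime_gt0 // dvdn_leq // pdiv_dvd.
have n'n : (n %/ p < n)%N by apply: ltn_Pdiv => //; apply: prime_gt1.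
case: (classic (exists z, z *~ p%:Z = y)) => [[z Ez]|nd]; last by case: (KEY pP nd).
have [z' Ez'] := IH (n %/ p)%N (ltnSE (leq_trans n'n nN)) z n'0.
exists z'; rewrite En PoszM mulrzA Ez' Ez //.
Qed.

Lemma phi_surj (g : V) : g != 0 -> forall r : rat, exists y, phi g y = r.
Proof.
move=> g0 r.
have Ed : (absz (denq r))%:Z = denq r by rewrite abszE gtr0_norm // denq_gt0.
have d0 : (0 < absz (denq r))%N by rewrite -ltz_nat Ed denq_gt0.
have [z Ez] := div_all (g *~ numq r) d0.
exists z; rewrite Ed in Ez; rewrite (phi_spec g0 _ Ez) ?divq_num_den //;
  by rewrite -lt0r denq_gt0.
Qed.
End ZV.

Section Grp.
Variables (G : Type) (mul : G -> G -> G) (one : G) (inv : G -> G).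
Hypothesis HG : is_group mul one inv.

Lemma comm_npow c x k : mul c x = mul x c ->
  mul c (npow mul one x k) = mul (npow mul one x k) c.
Proof.
move=> cx; elim: k => [|k IH] /=; first by rewrite /npow /= (grp_mulg1 HG) (grp_mul1g HG).
rewrite /npow /= -/(npow mul one x k).
by rewrite (grp_assoc HG) cx -(grp_assoc HG) IH (grp_assoc HG).
Qed.

Lemma comm_inv c x : mul c x = mul x c -> mul c (inv x) = mul (inv x) c.
Proof.
move=> cx.
rewrite -[mul (inv x) c](grp_mulg1 HG) -(grp_mulgV HG x).
rewrite !(grp_assoc HG) -[mul (mul (inv x) c) x](grp_assoc HG) cx.
by rewrite (grp_assoc HG) (grp_mulVg HG) (grp_mul1g HG).
Qed.

Lemma comm_zpow c x n : mul c x = mul x c ->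
  mul c (zpow mul one inv x n) = mul (zpow mul one inv x n) c.
Proof.
move=> cx; case: n => k; first exact: comm_npow.
by apply: comm_inv; apply: (comm_npow (k.+1) cx).
Qed.

Lemma comm_zz h i j :
  mul (zpow mul one inv h i) (zpow mul one inv h j) =
  mul (zpow mul one inv h j) (zpow mul one inv h i).
Proof.
apply: comm_zpow; apply/esym; exact: comm_zpow.
Qed.

Lemma grp_comm : locally_cyclic mul one inv -> forall a b, mul a b = mul b a.
Proof.
move=> Hlc a b; case: (Hlc (a :: b :: nil)) => g [_ H].
have [i ->] : exists i, a = zpow mul one inv g i.
  by apply/H; apply: gen_base; left.
have [j ->] : exists j, b = zpow mul one inv g j.
  by apply/H; apply: gen_base; right; left.
exact: comm_zz.
Qed.
End Grp.

Record AGrp := { car : Type; gmul : car -> car -> car; gone : car; ginv : car -> car;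
  gis : is_group gmul gone ginv; gcomm : forall a b, gmul a b = gmul b a }.
Definition Gz (B : AGrp) : Type := car B.
HB.instance Definition _ B := boolp.gen_eqMixin (Gz B).
HB.instance Definition _ B := boolp.gen_choiceMixin (Gz B).
HB.instance Definition _ (B : AGrp) := GRing.isZmodule.Build (Gz B)
  (grp_assoc (@gis B)) (@gcomm B) (grp_mul1g (@gis B)) (grp_mulVg (@gis B)).

Lemma zpowE (B : AGrp) (x : Gz B) (n : int) :
  zpow (@gmul B) (@gone B) (@ginv B) x n = x *~ n.
Proof.
have np k : npow (@gmul B) (@gone B) x k = x *+ k.
  elim: k => [|k IH] //; rewrite mulrS -IH //.
case: n => k; rewrite /zpow np //.
Qed.

From Stdlib Require Import ProofIrrelevance.

Lemma sig_eq (A : Type) (P : A -> Prop) (a b : {x | P x}) :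
  proj1_sig a = proj1_sig b -> a = b.
Proof.
case: a b => x Hx [y Hy] /= E; subst y; congr exist; apply: proof_irrelevance.
Qed.

Lemma Phi_iso (T : Type) (e : T -> T -> Prop) (P Q : T -> Prop) :
  induced_iso e P Q -> Phi e Q -> Phi e P.
Proof.
move=> [f [[g fK gK] Hf]].
pose s x := match excluded_middle_informative (P x) with
            | left H => proj1_sig (f (exist _ x H)) | right _ => x end.
have sx x (Hx : P x) : s x = proj1_sig (f (exist _ x Hx)).
  rewrite /s; case: (excluded_middle_informative (P x)) => // H.
  by rewrite (proof_irrelevance _ H Hx).
suff HT : Phi e P <-> Phi e Q by move=> H0; apply/HT.
apply: (@Phi_tr T T e e P Q s).
- by move=> x Hx; rewrite (sx x Hx); apply: proj2_sig.
- move=> y Hy; exists (proj1_sig (g (exist _ y Hy))); split; first exact: proj2_sig.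
  rewrite (sx _ (proj2_sig (g (exist _ y Hy)))).
  have -> : exist _ (proj1_sig (g (exist _ y Hy))) (proj2_sig (g (exist _ y Hy)))
            = g (exist _ y Hy) by apply: sig_eq.
  by rewrite gK.
- move=> x y Hx Hy; rewrite (sx x Hx) (sx y Hy) => /sig_eq E.
  by have := f_equal (@proj1_sig _ _) (can_inj fK E).
- move=> x y Hx Hy; rewrite (sx x Hx) (sx y Hy).
  exact: (Hf (exist _ x Hx) (exist _ y Hy)).
Qed.

Lemma Phi_ext (T : Type) (e e' : T -> T -> Prop) (P P' : T -> Prop) :
  (forall x y, e x y <-> e' x y) -> (forall x, P x <-> P' x) -> Phi e P -> Phi e' P'.
Proof.
move=> He HP.
suff T' : Phi e P <-> Phi e' P' by move=> H0; apply/T'.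
apply: (@Phi_tr T T e e' P P' id).
- by move=> x /HP.
- by move=> y /HP Hy; exists y.
- by [].
- by move=> x y _ _; apply: He.
Qed.

Theorem mainTheorem7 (G : Type) (mul : G -> G -> G) (one : G) (inv : G -> G)
  (HG : is_group mul one inv)
  (Hnontriv : exists x : G, x <> one)
  (Htf : torsion_free mul one inv)
  (Hlc : locally_cyclic mul one inv)
  (Hiso : forall x : G, induced_iso (adj mul one inv) (Oset mul one inv x) (Iset mul one inv x)) :
  iso_to_Q mul.
Proof.
pose B := {| car := G; gmul := mul; gone := one; ginv := inv; gis := HG;
             gcomm := grp_comm HG Hlc |}.
pose V : zmodType := Gz B.
have zE (x : V) n : zpow mul one inv x n = x *~ n := zpowE x n.
have tf : forall (x : V) (n : int), n != 0 -> x *~ n = 0 -> x = 0.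
  by move=> x n n0 E; apply: (Htf x n n0); rewrite zE.
have lc : forall a b : V, exists h i j, a = h *~ i /\ b = h *~ j.
  move=> a b; case: (Hlc (a :: b :: nil)) => g [_ H].
  have [i Ei] : exists i, a = zpow mul one inv g i by apply/H; apply: gen_base; left.
  have [j Ej] : exists j, b = zpow mul one inv g j by apply/H; apply: gen_base; right; left.
  by exists g, i, j; rewrite -!zE.
have arcE (a b : V) : Defs.arc mul one inv a b <-> arcV a b.
  rewrite /Defs.arc /arcV; split=> -[ab [n [n0 E]]]; split=> //; exists n; split=> //;
    by rewrite ?zE // -zE.
have adjE (a b : V) : adj mul one inv a b <-> adjV a b.
  by rewrite /adj /adjV !arcE.
have Hph : forall x : V, Phi (@adjV V) (IV x) -> Phi (@adjV V) (OV x).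
  move=> x HI.
  apply: (@Phi_ext V (adj mul one inv) (@adjV V) (Oset mul one inv x)).
  - exact: adjE.
  - by move=> y; rewrite /Oset /OV arcE.
  apply: (Phi_iso (Hiso x)).
  apply: (@Phi_ext V (@adjV V) (adj mul one inv) (IV x)) => //.
  - by move=> a b; rewrite adjE.
  - by move=> y; rewrite /Iset /IV arcE.
have [g g0] : exists g : V, g != 0.
  by case: Hnontriv => g g1; exists g; apply/eqP.
exists (phi g); split.
- pose finv (r : rat) : V := epsilon (inhabits g) (fun y => phi g y = r).
  have fK : cancel (phi g) finv.
    move=> y; apply: (phi_inj tf lc g0).
    by apply: (@epsilon_spec _ _ (fun y' => phi g y' = phi g y)); exists y.
  have gK : cancel finv (phi g).
    move=> r; apply: (@epsilon_spec _ _ (fun y' => phi g y' = r)).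
    exact: (phi_surj tf lc Hph g0).
  by exists finv.
- move=> a b; change (phi g ((a : V) + (b : V)) = phi g a + phi g b).
  exact: (phi_add tf lc a b g0).
Qed.
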